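(* In the setting below, consider a cube in $\mathcal C$ with vertices $X',Y',Z',W'$ (top) and $X,Y,Z,W$ (bottom), edges $j'\colon X'\to Y'$, $i'\colon Z'\to W'$, $j\colon X\to Y$, $i\colon Z\to W$ in $\mathcal A$; $q'\colon X'\to Z'$, $p'\colon Y'\to W'$, $q\colon X\to Z$, $p\colon Y\to W$ in $\mathcal B$; $x\colon X'\to X$, $y\colon Y'\to Y$, $z\colon Z'\to Z$, $w\colon W'\to W$ in $\mathcal C$; and face $2$-cells: right $I$: $py\Rightarrow wp'$; left $I'$: $qx\Rightarrow zq'$; front $J$: $\beta\colon wi'\Rightarrow iz$; back $J'$: $\beta'\colon yj'\Rightarrow jx$; bottom $K$: $pj\Rightarrow iq$; top $K'$: $p'j'\Rightarrow i'q'$. Each face is regarded as a down-square (for $I$: top $y$, left $p'$, right $p$, bottom $w$; for $I'$: top $x$, left $q'$, right $q$, bottom $z$; for $J$: top $i'$, left $z$, right $w$, bottom $i$; for $J'$: top $j'$, left $x$, right $y$, bottom $j$; $K$, $K'$ as written). Assume the cube is $2$-commutative, i.e. the pasted $2$-cells $pyj'\Rightarrow wp'j'\Rightarrow wi'q'\Rightarrow izq'$ (via $I,K',J$) and $pyj'\Rightarrow pjx\Rightarrow iqx\Rightarrow izq'$ (via $J',K,I'$) coincide, and assume $B_K$ and $B_{K'}$ are invertible. Then the composite $i'_!z^*q_*\xRightarrow{B_{I'}}i'_!q'_*x^*\xRightarrow{G_{K'}}p'_*j'_!x^*\xRightarrow{A_{J'}}p'_*y^*j_!$ equals $i'_!z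^*q_*\xRightarrow{A_J}w^*i_!q_*\xRightarrow{G_K}w^*p_*j_!\xRightarrow{B_I}p'_*y^*j_!$.
   Context: Setting. $\mathcal C,\mathcal D$ are $2$-categories; $\mathcal A,\mathcal B$ are $2$-subcategories of $\mathcal C$ (hom-inclusions fully faithful and injective on objects). Given: a pseudofunctor $\mathcal C\to\mathcal D^{\mathrm{coop}}$, $X\mapsto X$, $f\mapsto f^*$ ($f\colon X\to Y$ gives $f^*\colon Y\to X$), $(\alpha\colon f\Rightarrow g)\mapsto\alpha^*\colon g^*\Rightarrow f^*$, coherence $(gf)^*\cong f^*g^*$; pseudofunctors $\mathcal B\to\mathcal D$, $p\mapsto p_*$, and $\mathcal A\to\mathcal D$, $i\mapsto i_!$; adjunctions $p^*\dashv p_*$ (unit $\eta_p\colon1\Rightarrow p_*p^*$, counit $\epsilon_p\colon p^*p_*\Rightarrow1$) for $p\in\mathcal B$ and $i_!\dashv i^*$ (unit $\eta_i\colon1\Rightarrow i^*i_!$, counit $\epsilon_i\colon i_!i^*\Rightarrow1$) for $i\in\mathcal A$, compatible with the pseudofunctor structures (units/counits of composites correspond under coherence isomorphisms to composites; $2$-cells act by mates). $\cong$ denotes coherence isomorphisms. A down-square $D$: $j\colon X\to Y$ (top), $q\colon X\to Z$ (left), $i\colon Z\to W$ (bottom), $p\colon Y\to W$ (right), $\alpha\colon pj\Rightarrow iq$. If $p,q\in\mathcal B$: $B_D\colon i^*p_*\Rightarrow q_*j^*$ is $i^*p_*\xRightarrow{\eta_q}q_*q^*i^*p_*\cong q_*(iq)^*p_*\xRightarrow{\alpha^*}q_*(pj)^*p_*\cong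 q_*j^*p^*p_*\xRightarrow{\epsilon_p}q_*j^*$. If $i,j\in\mathcal A$: $A_D\colon j_!q^*\Rightarrow p^*i_!$ is $j_!q^*\xRightarrow{\eta_i}j_!q^*i^*i_!\cong j_!(iq)^*i_!\xRightarrow{\alpha^*}j_!(pj)^*i_!\cong j_!j^*p^*i_!\xRightarrow{\epsilon_j}p^*i_!$. If $i,j\in\mathcal A$, $p,q\in\mathcal B$ and $B_D$ is invertible, $G_D\colon i_!q_*\Rightarrow p_*j_!$ is $i_!q_*\xRightarrow{\eta_j}i_!q_*j^*j_!\xRightarrow{B_D^{-1}}i_!i^*p_*j_!\xRightarrow{\epsilon_i}p_*j_!$. (Here $B_I$ and $B_{I'}$ use that $p,p',q,q'\in\mathcal B$, and $A_J,A_{J'}$ that $i,i',j,j'\in\mathcal A$.) *)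

(* Defs.v *)
Set Implicit Arguments.
Unset Strict Implicit.

(* A strict 2-category: 1-cells compose strictly associatively and unitally
   (Leibniz equalities), 2-cells form hom-categories with vertical
   composition [vc b a] (= b after a) and horizontal composition [hc]. *)
Record Cat2 := {
  ob :> Type;
  hom : ob -> ob -> Type;
  idm : forall X, hom X X;
  cmp : forall X Y Z, hom Y Z -> hom X Y -> hom X Z;
  cell : forall X Y, hom X Y -> hom X Y -> Type;
  i2 : forall X Y (f : hom X Y), cell f f;
  vc : forall X Y (f g h : hom X Y), cell g h -> cell f g -> cell f h;
  hc : forall X Y Z (f f' : hom Y Z) (g g' : hom X Y),
        cell f f' -> cell g g' -> cell (cmp f g) (cmp f' g');
  cmpA : forall X Y Z W (h : hom Z W) (g : hom Y Z) (f : hom X Y),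
        cmp h (cmp g f) = cmp (cmp h g) f;
  cmp1l : forall X Y (f : hom X Y), cmp (idm Y) f = f;
  cmp1r : forall X Y (f : hom X Y), cmp f (idm X) = f
}.

Arguments hom {c} X Y.
Arguments idm {c} X.
Arguments cmp {c X Y Z} g f.
Arguments cell {c X Y} f g.
Arguments i2 {c X Y} f.
Arguments vc {c X Y f g h} b a.
Arguments hc {c X Y Z f f' g g'} b a.
Arguments cmpA {c X Y Z W} h g f.
Arguments cmp1l {c X Y} f.
Arguments cmp1r {c X Y} f.

Definition ecast (C : Cat2) (X Y : C) (f g : hom X Y) (e : f = g) : cell f g :=
  match e in _ = g' return cell f g' with eq_refl => i2 f end.
Arguments ecast {C X Y f g} e.

Record Is2Cat (C : Cat2) : Prop := {
  vA : forall (X Y : C) (f g h k : hom X Y) (c : cell h k) (b : cell g h) (a : cell f g),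
        vc c (vc b a) = vc (vc c b) a;
  v1l : forall (X Y : C) (f g : hom X Y) (a : cell f g), vc (i2 g) a = a;
  v1r : forall (X Y : C) (f g : hom X Y) (a : cell f g), vc a (i2 f) = a;
  hc_v : forall (X Y Z : C) (f f' f'' : hom Y Z) (g g' g'' : hom X Y)
           (b : cell f f') (b' : cell f' f'') (a : cell g g') (a' : cell g' g''),
        hc (vc b' b) (vc a' a) = vc (hc b' a') (hc b a);
  hc_1 : forall (X Y Z : C) (f : hom Y Z) (g : hom X Y), hc (i2 f) (i2 g) = i2 (cmp f g);
  hcA : forall (X Y Z W : C) (h h' : hom Z W) (g g' : hom Y Z) (f f' : hom X Y)
           (c : cell h h') (b : cell g g') (a : cell f f'),
        hc c (hc b a) = vc (ecast (eq_sym (cmpA h' g' f'))) (vc (hc (hc c b) a) (ecast (cmpA h g f)));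
  hc1l : forall (X Y : C) (f f' : hom X Y) (a : cell f f'),
        hc (i2 (idm Y)) a = vc (ecast (eq_sym (cmp1l f'))) (vc a (ecast (cmp1l f)));
  hc1r : forall (X Y : C) (f f' : hom X Y) (a : cell f f'),
        hc a (i2 (idm X)) = vc (ecast (eq_sym (cmp1r f'))) (vc a (ecast (cmp1r f)))
}.

(* A 2-subcategory given by a class of objects and a class of 1-cells,
   closed under identities and composition; it contains all 2-cells of C
   between its 1-cells (hom-inclusions fully faithful). *)
Record Sub2 (C : Cat2) := {
  sob : C -> Prop;
  smor : forall X Y : C, hom X Y -> Prop;
  smor_ob : forall (X Y : C) (f : hom X Y), smor f -> sob X /\ sob Y;
  sid : forall X : C, sob X -> smor (idm X);
  scmp : forall (X Y Z : C) (g : hom Y Z) (f : hom X Y), smor g -> smor f -> smor (cmp g f)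
}.
Arguments smor {C} _ {X Y} f.

Record PsContra (C D : Cat2) (P0 : C -> D) := {
  pb : forall X Y : C, hom X Y -> hom (P0 Y) (P0 X);
  pb2 : forall (X Y : C) (f g : hom X Y), cell f g -> cell (pb g) (pb f);
  phi : forall (X Y Z : C) (g : hom Y Z) (f : hom X Y), cell (pb (cmp g f)) (cmp (pb f) (pb g));
  phiI : forall (X Y Z : C) (g : hom Y Z) (f : hom X Y), cell (cmp (pb f) (pb g)) (pb (cmp g f));
  pio : forall X : C, cell (pb (idm X)) (idm (P0 X));
  pioI : forall X : C, cell (idm (P0 X)) (pb (idm X))
}.
Arguments pb {C D P0} _ {X Y} f.
Arguments pb2 {C D P0} _ {X Y f g} a.
Arguments phi {C D P0} _ {X Y Z} g f.
Arguments phiI {C D P0} _ {X Y Z} g f.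
Arguments pio {C D P0} _ X.
Arguments pioI {C D P0} _ X.

Record PsContraLaws (C D : Cat2) (P0 : C -> D) (F : @PsContra C D P0) : Prop := {
  pb2_v : forall (X Y : C) (f g h : hom X Y) (b : cell g h) (a : cell f g),
      pb2 F (vc b a) = vc (pb2 F a) (pb2 F b);
  pb2_1 : forall (X Y : C) (f : hom X Y), pb2 F (i2 f) = i2 (pb F f);
  phi_iso1 : forall (X Y Z : C) (g : hom Y Z) (f : hom X Y), vc (phiI F g f) (phi F g f) = i2 _;
  phi_iso2 : forall (X Y Z : C) (g : hom Y Z) (f : hom X Y), vc (phi F g f) (phiI F g f) = i2 _;
  pio_iso1 : forall X : C, vc (pioI F X) (pio F X) = i2 _;
  pio_iso2 : forall X : C, vc (pio F X) (pioI F X) = i2 _;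
  phi_nat : forall (X Y Z : C) (g g' : hom Y Z) (f f' : hom X Y) (b : cell g g') (a : cell f f'),
      vc (phi F g f) (pb2 F (hc b a)) = vc (hc (pb2 F a) (pb2 F b)) (phi F g' f');
  phi_assoc : forall (X Y Z W : C) (h : hom Z W) (g : hom Y Z) (f : hom X Y),
      vc (hc (phi F g f) (i2 (pb F h))) (phi F h (cmp g f))
      = vc (ecast (cmpA (pb F f) (pb F g) (pb F h)))
          (vc (hc (i2 (pb F f)) (phi F h g))
             (vc (phi F (cmp h g) f) (ecast (f_equal (pb F) (cmpA h g f)))));
  phi_unitr : forall (X Y : C) (f : hom X Y),
      vc (ecast (cmp1l (pb F f))) (vc (hc (pio F X) (i2 (pb F f))) (phi F f (idm X)))
      = ecast (f_equal (pb F) (cmp1r f));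
  phi_unitl : forall (X Y : C) (f : hom X Y),
      vc (ecast (cmp1r (pb F f))) (vc (hc (i2 (pb F f)) (pio F Y)) (phi F (idm Y) f))
      = ecast (f_equal (pb F) (cmp1l f))
}.

Record PsSub (C D : Cat2) (S : Sub2 C) (P0 : C -> D) := {
  fs : forall (X Y : C) (f : hom X Y), smor S f -> hom (P0 X) (P0 Y);
  fs2 : forall (X Y : C) (f g : hom X Y) (hf : smor S f) (hg : smor S g),
      cell f g -> cell (fs hf) (fs hg);
  psi : forall (X Y Z : C) (g : hom Y Z) (f : hom X Y) (hg : smor S g) (hf : smor S f)
      (hgf : smor S (cmp g f)), cell (cmp (fs hg) (fs hf)) (fs hgf);
  psiI : forall (X Y Z : C) (g : hom Y Z) (f : hom X Y) (hg : smor S g) (hf : smor S f)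
      (hgf : smor S (cmp g f)), cell (fs hgf) (cmp (fs hg) (fs hf));
  sio : forall (X : C) (h : smor S (idm X)), cell (fs h) (idm (P0 X));
  sioI : forall (X : C) (h : smor S (idm X)), cell (idm (P0 X)) (fs h)
}.
Arguments fs {C D S P0} _ {X Y f} hf.
Arguments fs2 {C D S P0} _ {X Y f g} hf hg a.
Arguments psi {C D S P0} _ {X Y Z g f} hg hf hgf.
Arguments psiI {C D S P0} _ {X Y Z g f} hg hf hgf.
Arguments sio {C D S P0} _ {X} h.
Arguments sioI {C D S P0} _ {X} h.

Record PsSubLaws (C D : Cat2) (S : Sub2 C) (P0 : C -> D) (G : @PsSub C D S P0) : Prop := {
  fs2_v : forall (X Y : C) (f g h : hom X Y) (hf : smor S f) (hg : smor S g) (hh : smor S h)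
      (b : cell g h) (a : cell f g),
      fs2 G hf hh (vc b a) = vc (fs2 G hg hh b) (fs2 G hf hg a);
  fs2_1 : forall (X Y : C) (f : hom X Y) (hf : smor S f), fs2 G hf hf (i2 f) = i2 (fs G hf);
  psi_iso1 : forall (X Y Z : C) (g : hom Y Z) (f : hom X Y) (hg : smor S g) (hf : smor S f) (hgf : smor S (cmp g f)),
      vc (psiI G hg hf hgf) (psi G hg hf hgf) = i2 _;
  psi_iso2 : forall (X Y Z : C) (g : hom Y Z) (f : hom X Y) (hg : smor S g) (hf : smor S f) (hgf : smor S (cmp g f)),
      vc (psi G hg hf hgf) (psiI G hg hf hgf) = i2 _;
  sio_iso1 : forall (X : C) (h : smor S (idm X)), vc (sioI G h) (sio G h) = i2 _;
  sio_iso2 : forall (X : C) (h : smor S (idm X)), vc (sio G h) (sioI G h) = i2 _;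
  psi_nat : forall (X Y Z : C) (g g' : hom Y Z) (f f' : hom X Y)
      (hg : smor S g) (hg' : smor S g') (hf : smor S f) (hf' : smor S f')
      (hgf : smor S (cmp g f)) (hgf' : smor S (cmp g' f')) (b : cell g g') (a : cell f f'),
      vc (psi G hg' hf' hgf') (hc (fs2 G hg hg' b) (fs2 G hf hf' a))
      = vc (fs2 G hgf hgf' (hc b a)) (psi G hg hf hgf);
  psi_assoc : forall (X Y Z W : C) (h : hom Z W) (g : hom Y Z) (f : hom X Y)
      (hh : smor S h) (hg : smor S g) (hf : smor S f) (hgf : smor S (cmp g f))
      (hhg : smor S (cmp h g)) (h1 : smor S (cmp h (cmp g f))) (h2 : smor S (cmp (cmp h g) f)),
      vc (psi G hh hgf h1) (hc (i2 (fs G hh)) (psi G hg hf hgf))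
      = vc (fs2 G h2 h1 (ecast (eq_sym (cmpA h g f))))
          (vc (psi G hhg hf h2)
             (vc (hc (psi G hh hg hhg) (i2 (fs G hf)))
                (ecast (cmpA (fs G hh) (fs G hg) (fs G hf)))));
  psi_unitr : forall (X Y : C) (f : hom X Y) (hf : smor S f) (hid : smor S (idm X))
      (hfid : smor S (cmp f (idm X))),
      vc (psi G hf hid hfid) (hc (i2 (fs G hf)) (sioI G hid))
      = vc (fs2 G hf hfid (ecast (eq_sym (cmp1r f)))) (ecast (cmp1r (fs G hf)));
  psi_unitl : forall (X Y : C) (f : hom X Y) (hf : smor S f) (hid : smor S (idm Y))
      (hidf : smor S (cmp (idm Y) f)),
      vc (psi G hid hf hidf) (hc (sioI G hid) (i2 (fs G hf)))
      = vc (fs2 G hf hidf (ecast (eq_sym (cmp1l f)))) (ecast (cmp1l (fs G hf)))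
}.

Definition IsAdj (D : Cat2) (X Y : D) (L : hom X Y) (R : hom Y X)
    (eta : cell (idm X) (cmp R L)) (eps : cell (cmp L R) (idm Y)) : Prop :=
  vc (ecast (cmp1l L)) (vc (hc eps (i2 L)) (vc (ecast (cmpA L R L))
      (vc (hc (i2 L) eta) (ecast (eq_sym (cmp1r L)))))) = i2 L
  /\
  vc (ecast (cmp1r R)) (vc (hc (i2 R) eps) (vc (ecast (eq_sym (cmpA R L R)))
      (vc (hc eta (i2 R)) (ecast (eq_sym (cmp1l R)))))) = i2 R.

Arguments IsAdj {D X Y} L R eta eps.

(* C, D strict 2-categories; A, B sub-2-categories of C; a pseudofunctor
   C -> D^coop (f |-> f^* ), pseudofunctors B -> D (p |-> p_* ) and
   A -> D (i |-> i_! ), all with the same object map P0 (written X |-> X in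
   the paper); units and counits of the adjunctions p^* -| p_* (p in B), i_! -| i^* (i in A). *)
Record Setting := {
  sC : Cat2;
  sD : Cat2;
  sA : Sub2 sC;
  sB : Sub2 sC;
  sP0 : sC -> sD;
  sF : @PsContra sC sD sP0;
  sBs : @PsSub sC sD sB sP0;
  sAl : @PsSub sC sD sA sP0;
  etaB : forall (X Y : sC) (p : hom X Y) (hp : smor sB p),
      cell (idm (sP0 Y)) (cmp (fs sBs hp) (pb sF p));
  epsB : forall (X Y : sC) (p : hom X Y) (hp : smor sB p),
      cell (cmp (pb sF p) (fs sBs hp)) (idm (sP0 X));
  etaA : forall (X Y : sC) (i : hom X Y) (hi : smor sA i),
      cell (idm (sP0 X)) (cmp (pb sF i) (fs sAl hi));
  epsA : forall (X Y : sC) (i : hom X Y) (hi : smor sA i),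
      cell (cmp (fs sAl hi) (pb sF i)) (idm (sP0 Y))
}.
Arguments sP0 : clear implicits.
Arguments sF : clear implicits.
Arguments sBs : clear implicits.
Arguments sAl : clear implicits.
Arguments etaB _ {X Y p} hp.
Arguments epsB _ {X Y p} hp.
Arguments etaA _ {X Y i} hi.
Arguments epsA _ {X Y i} hi.

Definition ps (S : Setting) (X Y : sC S) (p : hom X Y) (hp : smor (sB S) p)
  : hom (sP0 S X) (sP0 S Y) := fs (sBs S) hp.
Definition sh (S : Setting) (X Y : sC S) (i : hom X Y) (hi : smor (sA S) i)
  : hom (sP0 S X) (sP0 S Y) := fs (sAl S) hi.
Definition us (S : Setting) (X Y : sC S) (f : hom X Y)
  : hom (sP0 S Y) (sP0 S X) := pb (sF S) f.
Arguments ps S {X Y p} hp.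
Arguments sh S {X Y i} hi.
Arguments us S {X Y} f.

Record SettingLaws (S : Setting) : Prop := {
  law_C : Is2Cat (sC S);
  law_D : Is2Cat (sD S);
  law_F : PsContraLaws (sF S);
  law_Bs : PsSubLaws (sBs S);
  law_Al : PsSubLaws (sAl S);
  adj_B : forall (X Y : sC S) (p : hom X Y) (hp : smor (sB S) p),
      IsAdj (us S p) (ps S hp) (etaB S hp) (epsB S hp);
  adj_A : forall (X Y : sC S) (i : hom X Y) (hi : smor (sA S) i),
      IsAdj (sh S hi) (us S i) (etaA S hi) (epsA S hi);
  unitB_comp : forall (X Y Z : sC S) (p : hom X Y) (q : hom Y Z)
      (hp : smor (sB S) p) (hq : smor (sB S) q) (hqp : smor (sB S) (cmp q p)),
      etaB S hqp =
      vc (hc (i2 (ps S hqp)) (phiI (sF S) q p))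
      (vc (ecast (eq_sym (cmpA (ps S hqp) (us S p) (us S q))))
      (vc (hc (hc (psi (sBs S) hq hp hqp) (i2 (us S p))) (i2 (us S q)))
      (vc (hc (ecast (cmpA (ps S hq) (ps S hp) (us S p))) (i2 (us S q)))
      (vc (hc (hc (i2 (ps S hq)) (etaB S hp)) (i2 (us S q)))
      (vc (hc (ecast (eq_sym (cmp1r (ps S hq)))) (i2 (us S q)))
          (etaB S hq))))));
  counitB_comp : forall (X Y Z : sC S) (p : hom X Y) (q : hom Y Z)
      (hp : smor (sB S) p) (hq : smor (sB S) q) (hqp : smor (sB S) (cmp q p)),
      epsB S hqp =
      vc (epsB S hp)
      (vc (hc (i2 (us S p)) (ecast (cmp1l (ps S hp))))
      (vc (hc (i2 (us S p)) (hc (epsB S hq) (i2 (ps S hp))))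
      (vc (hc (i2 (us S p)) (ecast (cmpA (us S q) (ps S hq) (ps S hp))))
      (vc (ecast (eq_sym (cmpA (us S p) (us S q) (cmp (ps S hq) (ps S hp)))))
          (hc (phi (sF S) q p) (psiI (sBs S) hq hp hqp))))));
  unitA_comp : forall (X Y Z : sC S) (i : hom X Y) (k : hom Y Z)
      (hi : smor (sA S) i) (hk : smor (sA S) k) (hki : smor (sA S) (cmp k i)),
      etaA S hki =
      vc (hc (phiI (sF S) k i) (psi (sAl S) hk hi hki))
      (vc (ecast (cmpA (us S i) (us S k) (cmp (sh S hk) (sh S hi))))
      (vc (hc (i2 (us S i)) (ecast (eq_sym (cmpA (us S k) (sh S hk) (sh S hi)))))
      (vc (hc (i2 (us S i)) (hc (etaA S hk) (i2 (sh S hi))))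
      (vc (hc (i2 (us S i)) (ecast (eq_sym (cmp1l (sh S hi)))))
          (etaA S hi)))));
  counitA_comp : forall (X Y Z : sC S) (i : hom X Y) (k : hom Y Z)
      (hi : smor (sA S) i) (hk : smor (sA S) k) (hki : smor (sA S) (cmp k i)),
      epsA S hki =
      vc (epsA S hk)
      (vc (hc (i2 (sh S hk)) (ecast (cmp1l (us S k))))
      (vc (hc (i2 (sh S hk)) (hc (epsA S hi) (i2 (us S k))))
      (vc (hc (i2 (sh S hk)) (ecast (cmpA (sh S hi) (us S i) (us S k))))
      (vc (ecast (eq_sym (cmpA (sh S hk) (sh S hi) (cmp (us S i) (us S k)))))
          (hc (psiI (sAl S) hk hi hki) (phi (sF S) k i))))));
  (* 2-cells act by mates *)
  mate_B : forall (X Y : sC S) (p p' : hom X Y) (hp : smor (sB S) p) (hp' : smor (sB S) p')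
      (a : cell p p'),
      fs2 (sBs S) hp hp' a =
      vc (ecast (cmp1r (ps S hp')))
      (vc (hc (i2 (ps S hp')) (epsB S hp))
      (vc (ecast (eq_sym (cmpA (ps S hp') (us S p) (ps S hp))))
      (vc (hc (hc (i2 (ps S hp')) (pb2 (sF S) a)) (i2 (ps S hp)))
      (vc (hc (etaB S hp') (i2 (ps S hp)))
          (ecast (eq_sym (cmp1l (ps S hp))))))));
  mate_A : forall (X Y : sC S) (i i' : hom X Y) (hi : smor (sA S) i) (hi' : smor (sA S) i')
      (a : cell i i'),
      fs2 (sAl S) hi hi' a =
      vc (ecast (cmp1l (sh S hi')))
      (vc (hc (epsA S hi) (i2 (sh S hi')))
      (vc (ecast (cmpA (sh S hi) (us S i) (sh S hi')))
      (vc (hc (i2 (sh S hi)) (hc (pb2 (sF S) a) (i2 (sh S hi'))))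
      (vc (hc (i2 (sh S hi)) (etaA S hi'))
          (ecast (eq_sym (cmp1r (sh S hi))))))))
}.

(* Down-square D: j : X -> Y (top), q : X -> Z (left), i : Z -> W (bottom),
   p : Y -> W (right), a : p j => i q. *)

Definition Bsq (S : Setting) (X Y Z W : sC S) (j : hom X Y) (q : hom X Z)
    (i : hom Z W) (p : hom Y W) (hp : smor (sB S) p) (hq : smor (sB S) q)
    (a : cell (cmp p j) (cmp i q))
  : cell (cmp (us S i) (ps S hp)) (cmp (ps S hq) (us S j)) :=
  vc (hc (i2 (ps S hq)) (ecast (cmp1r (us S j))))
  (vc (hc (i2 (ps S hq)) (hc (i2 (us S j)) (epsB S hp)))
  (vc (hc (i2 (ps S hq)) (ecast (eq_sym (cmpA (us S j) (us S p) (ps S hp)))))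
  (vc (hc (i2 (ps S hq)) (hc (phi (sF S) p j) (i2 (ps S hp))))
  (vc (hc (i2 (ps S hq)) (hc (pb2 (sF S) a) (i2 (ps S hp))))
  (vc (hc (i2 (ps S hq)) (hc (phiI (sF S) i q) (i2 (ps S hp))))
  (vc (hc (i2 (ps S hq)) (ecast (cmpA (us S q) (us S i) (ps S hp))))
  (vc (ecast (eq_sym (cmpA (ps S hq) (us S q) (cmp (us S i) (ps S hp)))))
  (vc (hc (etaB S hq) (i2 (cmp (us S i) (ps S hp))))
      (ecast (eq_sym (cmp1l (cmp (us S i) (ps S hp))))))))))))).

Definition Asq (S : Setting) (X Y Z W : sC S) (j : hom X Y) (q : hom X Z)
    (i : hom Z W) (p : hom Y W) (hi : smor (sA S) i) (hj : smor (sA S) j)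
    (a : cell (cmp p j) (cmp i q))
  : cell (cmp (sh S hj) (us S q)) (cmp (us S p) (sh S hi)) :=
  vc (ecast (cmp1l (cmp (us S p) (sh S hi))))
  (vc (hc (epsA S hj) (i2 (cmp (us S p) (sh S hi))))
  (vc (ecast (cmpA (sh S hj) (us S j) (cmp (us S p) (sh S hi))))
  (vc (hc (i2 (sh S hj)) (ecast (eq_sym (cmpA (us S j) (us S p) (sh S hi)))))
  (vc (hc (i2 (sh S hj)) (hc (phi (sF S) p j) (i2 (sh S hi))))
  (vc (hc (i2 (sh S hj)) (hc (pb2 (sF S) a) (i2 (sh S hi))))
  (vc (hc (i2 (sh S hj)) (hc (phiI (sF S) i q) (i2 (sh S hi))))
  (vc (hc (i2 (sh S hj)) (ecast (cmpA (us S q) (us S i) (sh S hi))))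
  (vc (ecast (eq_sym (cmpA (sh S hj) (us S q) (cmp (us S i) (sh S hi)))))
  (vc (hc (i2 (cmp (sh S hj) (us S q))) (etaA S hi))
      (ecast (eq_sym (cmp1r (cmp (sh S hj) (us S q)))))))))))))).

(* G_D : i_! q_* => p_* j_!, defined from the inverse Binv of B_D
   (i, j in A; p, q in B). It is used only when Binv is a two-sided inverse
   of B_D. *)
Definition Gsq (S : Setting) (X Y Z W : sC S) (j : hom X Y) (q : hom X Z)
    (i : hom Z W) (p : hom Y W) (hi : smor (sA S) i) (hj : smor (sA S) j)
    (hp : smor (sB S) p) (hq : smor (sB S) q)
    (Binv : cell (cmp (ps S hq) (us S j)) (cmp (us S i) (ps S hp)))
  : cell (cmp (sh S hi) (ps S hq)) (cmp (ps S hp) (sh S hj)) :=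
  vc (ecast (cmp1l (cmp (ps S hp) (sh S hj))))
  (vc (hc (epsA S hi) (i2 (cmp (ps S hp) (sh S hj))))
  (vc (ecast (cmpA (sh S hi) (us S i) (cmp (ps S hp) (sh S hj))))
  (vc (hc (i2 (sh S hi)) (ecast (eq_sym (cmpA (us S i) (ps S hp) (sh S hj)))))
  (vc (hc (i2 (sh S hi)) (hc Binv (i2 (sh S hj))))
  (vc (hc (i2 (sh S hi)) (ecast (cmpA (ps S hq) (us S j) (sh S hj))))
  (vc (ecast (eq_sym (cmpA (sh S hi) (ps S hq) (cmp (us S j) (sh S hj)))))
  (vc (hc (i2 (cmp (sh S hi) (ps S hq))) (etaA S hj))
      (ecast (eq_sym (cmp1r (cmp (sh S hi) (ps S hq)))))))))))).

Definition IsInverse (D : Cat2) (X Y : D) (f g : hom X Y) (a : cell f g) (b : cell g f) : Prop :=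
  vc b a = i2 f /\ vc a b = i2 g.
Arguments IsInverse {D X Y f g} a b.
Arguments Bsq S {X Y Z W} j q i p hp hq a.
Arguments Asq S {X Y Z W} j q i p hi hj a.
Arguments Gsq S {X Y Z W} j q i p hi hj hp hq Binv.

(* Main.v *)
Require Import Defs.
From Stdlib Require Import ProofIrrelevance.
Set Implicit Arguments.
Unset Strict Implicit.

Definition tr {C : Cat2} {X Y : C} {f g f' g' : hom X Y} (e1 : f = f') (e2 : g = g')
  (a : cell f g) : cell f' g' :=
  match e1 in _ = f1 return cell f1 g' with eq_refl =>
    match e2 in _ = g1 return cell f g1 with eq_refl => a end end.

Definition heq {C : Cat2} {X Y : C} {f g f' g' : hom X Y} (a : cell f g) (b : cell f' g') : Prop :=
  exists (e1 : f = f') (e2 : g = g'), tr e1 e2 a = b.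

Section HeqBasic.
Context {C : Cat2}.

Lemma heq_refl (X Y : C) (f g : hom X Y) (a : cell f g) : heq a a.
Proof. exists eq_refl, eq_refl. reflexivity. Qed.

Lemma heq_sym (X Y : C) (f g f' g' : hom X Y) (a : cell f g) (b : cell f' g') :
  heq a b -> heq b a.
Proof. intros [e1 [e2 E]]. subst f' g'. cbn in E. subst b. apply heq_refl. Qed.

Lemma heq_trans (X Y : C) (f g f' g' f'' g'' : hom X Y) (a : cell f g) (b : cell f' g') (c : cell f'' g'') :
  heq a b -> heq b c -> heq a c.
Proof. intros [e1 [e2 E]] [e3 [e4 E']]. subst f' g' f'' g''. cbn in *. subst. apply heq_refl. Qed.

Lemma heq_eq (X Y : C) (f g : hom X Y) (a b : cell f g) : heq a b -> a = b.
Proof. intros [e1 [e2 E]]. rewrite (proof_irrelevance _ e1 eq_refl), (proof_irrelevance _ e2 eq_refl) in E. exact E. Qed.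

Lemma eq_heq (X Y : C) (f g : hom X Y) (a b : cell f g) : a = b -> heq a b.
Proof. intros ->. apply heq_refl. Qed.

Lemma heq_vc (X Y : C) (f g h f' g' h' : hom X Y) (b : cell g h) (a : cell f g)
  (b' : cell g' h') (a' : cell f' g') :
  heq b b' -> heq a a' -> heq (vc b a) (vc b' a').
Proof.
  intros [e1 [e2 E]] [e3 [e4 E']]. subst g' h' f'. cbn in *.
  rewrite (proof_irrelevance _ e4 eq_refl) in E'. cbn in E'. subst. apply heq_refl.
Qed.

Lemma heq_hc (X Y Z : C) (f f' : hom Y Z) (g g' : hom X Y) (f1 f1' : hom Y Z) (g1 g1' : hom X Y)
  (b : cell f f') (a : cell g g') (b1 : cell f1 f1') (a1 : cell g1 g1') :
  heq b b1 -> heq a a1 -> heq (hc b a) (hc b1 a1).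
Proof.
  intros [e1 [e2 E]] [e3 [e4 E']]. subst. cbn. apply heq_refl.
Qed.

Lemma heq_i2 (X Y : C) (f f' : hom X Y) : f = f' -> heq (i2 f) (i2 f').
Proof. intros ->. apply heq_refl. Qed.

Lemma heq_ecast (X Y : C) (f g : hom X Y) (e : f = g) : heq (ecast e) (i2 f).
Proof. destruct e. apply heq_refl. Qed.

End HeqBasic.


Definition vcc {C : Cat2} {X Y : C} {f g g' h : hom X Y} (e : g = g') (b : cell g' h) (a : cell f g) : cell f h :=
  vc b (vc (ecast e) a).

Lemma heq_vcc {C : Cat2} (X Y : C) (f g g' h f1 g1 g1' h1 : hom X Y) (e : g = g') (b : cell g' h) (a : cell f g)
  (b' : cell g1' h1) (a' : cell f1 g1) (hb : heq b b') (ha : heq a a') (E : g1 = g1') :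
  heq (vcc e b a) (vcc E b' a').
Proof.
  destruct hb as [e1 [e2 Eb]]. destruct ha as [e3 [e4 Ea]]. subst b' a'.
  subst g1' h1 f1 g1. cbn.
  rewrite (proof_irrelevance _ E e). apply heq_refl.
Qed.

Section HeqLaws2.
Context {C : Cat2} (H : Is2Cat C).

Lemma heq_sandwich (X Y : C) (f f' g g' : hom X Y) (e1 : f' = f) (e2 : g = g') (a : cell f g) :
  heq (vc (ecast e2) (vc a (ecast e1))) a.
Proof. subst. cbn. apply eq_heq. rewrite (v1l H), (v1r H). reflexivity. Qed.

Lemma R_vc (X Y : C) (f g h : hom X Y) (b : cell g h) (a : cell f g) :
  heq (vc b a) (vcc eq_refl b a).
Proof. apply eq_heq. unfold vcc. cbn. rewrite (v1l H). reflexivity. Qed.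
Lemma R_vccA (X Y : C) (f g g' h h' k : hom X Y) (e1 : h = h') (e2 : g = g') (c : cell h' k) (b : cell g' h)
  (a : cell f g) : heq (vcc e2 (vcc e1 c b) a) (vcc e1 c (vcc e2 b a)).
Proof. apply eq_heq. unfold vcc. rewrite !(vA H). reflexivity. Qed.
Lemma R_head_i2 (X Y : C) (f g g' : hom X Y) (e : g = g') (a : cell f g) : heq (vcc e (i2 g') a) a.
Proof. subst. apply eq_heq. unfold vcc. cbn. rewrite !(v1l H). reflexivity. Qed.
Lemma R_tail_i2 (X Y : C) (f f' h : hom X Y) (e : f = f') (b : cell f' h) : heq (vcc e b (i2 f)) b.
Proof. subst. unfold vcc. cbn. apply eq_heq. rewrite !(v1l H), (v1r H). reflexivity. Qed.
Lemma R_mid_i2 (X Y : C) (f g g' g'' h : hom X Y) (e1 : g' = g'') (e2 : g = g') (c : cell g'' h) (a : cell f g) :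
  heq (vcc e1 c (vcc e2 (i2 g') a)) (vcc (eq_trans e2 e1) c a).
Proof. subst. unfold vcc. cbn. apply eq_heq. rewrite !(v1l H). reflexivity. Qed.
Lemma R_ecast (X Y : C) (f g : hom X Y) (e : f = g) : H = H -> heq (ecast e) (i2 f).
Proof. intros _. apply heq_ecast. Qed.
Lemma R_hc1 (X Y Z : C) (f : hom Y Z) (g : hom X Y) : heq (hc (i2 f) (i2 g)) (i2 (cmp f g)).
Proof. apply eq_heq. apply (hc_1 H). Qed.
Lemma R_distl (X Y Z : C) (f : hom Y Z) (g h h' k : hom X Y) (e : h = h') (b : cell h' k) (a : cell g h) :
  heq (hc (i2 f) (vcc e b a)) (vcc (f_equal (cmp f) e) (hc (i2 f) b) (hc (i2 f) a)).
Proof. subst. apply eq_heq. unfold vcc. cbn. rewrite !(v1l H). rewrite <- (hc_v H). rewrite (v1l H). reflexivity. Qed.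
Lemma R_distr (X Y Z : C) (g : hom X Y) (f h h' k : hom Y Z) (e : h = h') (b : cell h' k) (a : cell f h) :
  heq (hc (vcc e b a) (i2 g)) (vcc (f_equal (fun x => cmp x g) e) (hc b (i2 g)) (hc a (i2 g))).
Proof. subst. apply eq_heq. unfold vcc. cbn. rewrite !(v1l H). rewrite <- (hc_v H). rewrite (v1l H). reflexivity. Qed.
Lemma R_hcA (X Y Z W : C) (h h' : hom Z W) (g g' : hom Y Z) (f f' : hom X Y)
  (c : cell h h') (b : cell g g') (a : cell f f') :
  heq (hc c (hc b a)) (hc (hc c b) a).
Proof. rewrite (hcA H). apply heq_sandwich. Qed.
Lemma R_assoc3 (X Y Z W : C) (h : hom Z W) (g g' : hom Y Z) (f : hom X Y) (b : cell g g') :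
  heq (hc (hc (i2 h) b) (i2 f)) (hc (i2 h) (hc b (i2 f))).
Proof. apply heq_sym. apply R_hcA. Qed.
Lemma R_mergel (X Y Z W : C) (h : hom Z W) (g : hom Y Z) (f f' : hom X Y) (a : cell f f') :
  heq (hc (i2 h) (hc (i2 g) a)) (hc (i2 (cmp h g)) a).
Proof. eapply heq_trans. apply R_hcA. apply heq_hc. apply R_hc1. apply heq_refl. Qed.
Lemma R_merger (X Y Z W : C) (h h' : hom Z W) (g : hom Y Z) (f : hom X Y) (a : cell h h') :
  heq (hc (hc a (i2 g)) (i2 f)) (hc a (i2 (cmp g f))).
Proof. eapply heq_trans. apply heq_sym. apply R_hcA. apply heq_hc. apply heq_refl. apply R_hc1. Qed.
Lemma R_idl (X Y : C) (f f' : hom X Y) (a : cell f f') : heq (hc (i2 (idm Y)) a) a.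
Proof. rewrite (hc1l H). apply heq_sandwich. Qed.
Lemma R_idr (X Y : C) (f f' : hom X Y) (a : cell f f') : heq (hc a (i2 (idm X))) a.
Proof. rewrite (hc1r H). apply heq_sandwich. Qed.
End HeqLaws2.

#[global] Opaque vcc.

#[global] Transparent vcc.
Section Moves.
Context {C : Cat2} (H : Is2Cat C).

Lemma hc_split (X Y Z : C) (f f' : hom Y Z) (g g' : hom X Y) (a : cell f f') (b : cell g g') :
  vc (hc (i2 f') b) (hc a (i2 g)) = hc a b /\ vc (hc a (i2 g')) (hc (i2 f) b) = hc a b.
Proof. split; rewrite <- (hc_v H); rewrite (v1l H), (v1r H); reflexivity. Qed.

Lemma slideLR (X Y Z : C) (f f' : hom Y Z) (g g' : hom X Y) (a : cell f f') (b : cell g g')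
  (P1 Q1 Q2 R2 : hom X Z) (x : cell P1 Q1) (y : cell Q2 R2)
  (hx : heq x (hc a (i2 g))) (hy : heq y (hc (i2 f') b)) (e : Q1 = Q2) :
  heq (vcc e y x) (vcc eq_refl (hc a (i2 g')) (hc (i2 f) b)).
Proof.
  destruct hx as [e1 [e2 Ex]]. destruct hy as [e3 [e4 Ey]]. subst P1 Q1 Q2 R2. cbn in Ex, Ey. subst x y.
  rewrite (proof_irrelevance _ e eq_refl). apply eq_heq. unfold vcc. cbn.
  rewrite !(v1l H). destruct (hc_split a b) as [E1 E2]. rewrite E1, E2. reflexivity.
Qed.

Lemma slideRL (X Y Z : C) (f f' : hom Y Z) (g g' : hom X Y) (a : cell f f') (b : cell g g')
  (P1 Q1 Q2 R2 : hom X Z) (x : cell P1 Q1) (y : cell Q2 R2)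
  (hx : heq x (hc (i2 f) b)) (hy : heq y (hc a (i2 g'))) (e : Q1 = Q2) :
  heq (vcc e y x) (vcc eq_refl (hc (i2 f') b) (hc a (i2 g))).
Proof.
  destruct hx as [e1 [e2 Ex]]. destruct hy as [e3 [e4 Ey]]. subst P1 Q1 Q2 R2. cbn in Ex, Ey. subst x y.
  rewrite (proof_irrelevance _ e eq_refl). apply eq_heq. unfold vcc. cbn.
  rewrite !(v1l H). destruct (hc_split a b) as [E1 E2]. rewrite E1, E2. reflexivity.
Qed.

Lemma hwin (X Y : C) (f g g' h f1 g1 g1' h1 : hom X Y) (e : g = g') (w : cell g' h) (r : cell f g)
  (w' : cell g1' h1) (hw : heq w w') (E : g = g1') : heq (vcc e w r) (vcc E w' r).
Proof. apply heq_vcc. exact hw. apply heq_refl. Qed.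

Lemma vcc_assoc_eq (X Y : C) (f g g' h h' k : hom X Y) (e1 : h = h') (e2 : g = g') (c : cell h' k) (b : cell g' h)
  (a : cell f g) : vcc e2 (vcc e1 c b) a = vcc e1 c (vcc e2 b a).
Proof. unfold vcc. rewrite !(vA H). reflexivity. Qed.

End Moves.
#[global] Opaque vcc.
#[global] Transparent vcc.
Section Reps.
Context {C : Cat2} (H : Is2Cat C).
Lemma vcc_reassoc (X Y : C) (f g g' h h' k : hom X Y) (e1 : h = h') (e2 : g = g') (c : cell h' k) (b : cell g' h)
  (a : cell f g) : vcc e1 c (vcc e2 b a) = vcc e2 (vcc e1 c b) a.
Proof. unfold vcc. rewrite !(vA H). reflexivity. Qed.

Lemma hrep1r (X Y : C) (f g g' h h1 : hom X Y) (e : g = g') (x : cell g' h) (r : cell f g)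
  (P : cell g' h) (Q : cell g' h1) (F : heq P Q) (hx : heq x P) (E : g = g') :
  heq (vcc e x r) (vcc E Q r).
Proof. apply heq_vcc. eapply heq_trans; eassumption. apply heq_refl. Qed.

Lemma hrep2r (X Y : C) (f g g' h h' k P0 P1 Q0 Q1 : hom X Y) (e1 : h = h') (e2 : g = g') (y : cell h' k) (x : cell g' h)
  (r : cell f g) (P : cell P0 P1) (Q : cell Q0 Q1) (F : heq P Q) (hw : heq (vcc e1 y x) P) (E : g = Q0) :
  heq (vcc e1 y (vcc e2 x r)) (vcc E Q r).
Proof. rewrite vcc_reassoc. apply heq_vcc. eapply heq_trans; eassumption. apply heq_refl. Qed.

Lemma hrep3r (X Y : C) (f g g' h h' k k' l P0 P1 Q0 Q1 : hom X Y) (e0 : k = k') (e1 : h = h') (e2 : g = g')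
  (z : cell k' l) (y : cell h' k) (x : cell g' h)
  (r : cell f g) (P : cell P0 P1) (Q : cell Q0 Q1) (F : heq P Q) (hw : heq (vcc e0 z (vcc e1 y x)) P) (E : g = Q0) :
  heq (vcc e0 z (vcc e1 y (vcc e2 x r))) (vcc E Q r).
Proof. rewrite (vcc_reassoc e1). rewrite (vcc_reassoc e0). apply heq_vcc. eapply heq_trans; eassumption. apply heq_refl. Qed.

Lemma hrep4r (X Y : C) (f g g' h h' k k' l l' m P0 P1 Q0 Q1 : hom X Y) (e00 : l = l') (e0 : k = k') (e1 : h = h') (e2 : g = g')
  (u : cell l' m) (z : cell k' l) (y : cell h' k) (x : cell g' h)
  (r : cell f g) (P : cell P0 P1) (Q : cell Q0 Q1) (F : heq P Q)
  (hw : heq (vcc e00 u (vcc e0 z (vcc e1 y x))) P) (E : g = Q0) :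
  heq (vcc e00 u (vcc e0 z (vcc e1 y (vcc e2 x r)))) (vcc E Q r).
Proof.
  rewrite (vcc_reassoc e1). rewrite (vcc_reassoc e0). rewrite (vcc_reassoc e00).
  apply heq_vcc. eapply heq_trans; eassumption. apply heq_refl.
Qed.

Lemma hrep5r (X Y : C) (f g g' h h' k k' l l' m m' n P0 P1 Q0 Q1 : hom X Y) (e000 : m = m') (e00 : l = l') (e0 : k = k') (e1 : h = h') (e2 : g = g')
  (v : cell m' n) (u : cell l' m) (z : cell k' l) (y : cell h' k) (x : cell g' h)
  (r : cell f g) (P : cell P0 P1) (Q : cell Q0 Q1) (F : heq P Q)
  (hw : heq (vcc e000 v (vcc e00 u (vcc e0 z (vcc e1 y x)))) P) (E : g = Q0) :
  heq (vcc e000 v (vcc e00 u (vcc e0 z (vcc e1 y (vcc e2 x r))))) (vcc E Q r).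
Proof.
  rewrite (vcc_reassoc e1). rewrite (vcc_reassoc e0). rewrite (vcc_reassoc e00). rewrite (vcc_reassoc e000).
  apply heq_vcc. eapply heq_trans; eassumption. apply heq_refl.
Qed.
End Reps.
#[global] Opaque vcc.

Arguments hrep1r {C} {X} {Y} {f} {g} {g'} {h} {h1} {e} {x} {r} {P} {Q} F hx {E}.
Arguments hrep2r {C} H {X} {Y} {f} {g} {g'} {h} {h'} {k} {P0} {P1} {Q0} {Q1} {e1} {e2} {y} {x} {r} {P} {Q} F hw {E}.
Arguments hrep3r {C} H {X} {Y} {f} {g} {g'} {h} {h'} {k} {k'} {l} {P0} {P1} {Q0} {Q1} {e0} {e1} {e2} {z} {y} {x} {r} {P} {Q} F hw {E}.
Arguments hrep4r {C} H {X} {Y} {f} {g} {g'} {h} {h'} {k} {k'} {l} {l'} {m} {P0} {P1} {Q0} {Q1} {e00} {e0} {e1} {e2} {u} {z} {y} {x} {r} {P} {Q} F hw {E}.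
Arguments hrep5r {C} H {X} {Y} {f} {g} {g'} {h} {h'} {k} {k'} {l} {l'} {m} {m'} {n} {P0} {P1} {Q0} {Q1} {e000} {e00} {e0} {e1} {e2} {v} {u} {z} {y} {x} {r} {P} {Q} F hw {E}.

Lemma hrep_e {C : Cat2} (X Y : C) (f g f' g' f1 g1 : hom X Y) (x : cell f g) (P : cell f' g') (Q : cell f1 g1)
  (F : heq P Q) (hx : heq x P) : heq x Q.
Proof. eapply heq_trans; eassumption. Qed.

Lemma hwin2 {C : Cat2} (H : Is2Cat C) (X Y : C) (f g g' h h' k Q0 Q1 : hom X Y) (e1 : h = h') (e2 : g = g') (y : cell h' k) (x : cell g' h)
  (r : cell f g) (Q : cell Q0 Q1) (F : heq (vcc e1 y x) Q) (E : g = Q0) :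
  heq (vcc e1 y (vcc e2 x r)) (vcc E Q r).
Proof. eapply hrep2r. exact H. exact F. apply heq_refl. Qed.

(* slide elements at positions n (later) and n+1 (earlier); dir 0: earlier acts on left part (a), later on right (b) *)

Lemma R_ecast' {C : Cat2} (H : Is2Cat C) (X Y : C) (f g : hom X Y) (e : f = g) : heq (ecast e) (i2 f).
Proof. apply heq_ecast. Qed.

Ltac cell_eq := match goal with |- @eq (hom _ _) _ _ =>
  repeat (first [rewrite cmpA | rewrite cmp1l | rewrite cmp1r]); reflexivity end.
Ltac cell_eq' := match goal with |- @eq (hom _ _) _ _ => cell_eq end.

Definition vc2 {C : Cat2} {X Y : C} {f g g' h : hom X Y} (b : cell g' h) (a : cell f g) (e : g = g') : cell f h := vcc e b a.
Lemma R_vc2 {C : Cat2} {X Y : C} {f g g' h : hom X Y} (b : cell g' h) (a : cell f g) (e : g = g') :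
  heq (vc2 b a e) (vcc e b a).
Proof. apply heq_refl. Qed.

Ltac nfchain H :=
  lazymatch goal with |- heq ?T _ =>
  lazymatch T with
  | vcc _ (i2 _) _ => simple eapply (R_head_i2 H)
  | vcc _ _ (i2 _) => simple eapply (R_tail_i2 H)
  | vcc _ (vcc _ _ _) _ => eapply heq_trans;
       [ simple eapply (R_vccA H) | simple eapply heq_vcc; [ simple eapply heq_refl | nfchain H ] ]
  | _ => simple eapply heq_refl
  end end.

Ltac nfhc H :=
  lazymatch goal with |- heq ?T _ =>
  lazymatch T with
  | hc (i2 (idm _)) _ => simple eapply (R_idl H)
  | hc _ (i2 (idm _)) => simple eapply (R_idr H)
  | hc (i2 _) (i2 _) => simple eapply (R_hc1 H)
  | hc (i2 _) (vcc _ _ _) => eapply heq_trans;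
       [ simple eapply (R_distl H) | simple eapply heq_vcc; [ nfhc H | nfhc H ] ]
  | hc (vcc _ _ _) (i2 _) => eapply heq_trans;
       [ simple eapply (R_distr H) | simple eapply heq_vcc; [ nfhc H | nfhc H ] ]
  | hc (i2 _) (hc (i2 _) _) => eapply heq_trans; [ simple eapply (R_mergel H) | nfhc H ]
  | hc (hc _ (i2 _)) (i2 _) => eapply heq_trans; [ simple eapply (R_merger H) | nfhc H ]
  | hc (hc (i2 _) _) (i2 _) => eapply heq_trans;
       [ simple eapply (R_assoc3 H) | simple eapply heq_hc; [ simple eapply heq_refl | nfhc H ] ]
  | _ => simple eapply heq_refl
  end end.

Ltac nf H :=
  lazymatch goal with |- heq ?T _ =>
  lazymatch T with
  | vc _ _ => eapply heq_trans; [ simple eapply (R_vc H) | nf H ]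
  | vc2 _ _ _ => eapply heq_trans; [ simple eapply R_vc2 | nf H ]
  | vcc _ _ _ => eapply heq_trans; [ simple eapply heq_vcc; [ nf H | nf H ] | nfchain H ]
  | hc _ _ => eapply heq_trans; [ simple eapply heq_hc; [ nf H | nf H ] | nfhc H ]
  | ecast _ => simple eapply (R_ecast' H)
  | _ => simple eapply heq_refl
  end end.

Ltac hnorm H := unshelve (eapply heq_trans; [ nf H | ]); try cell_eq'.
Ltac hnormR H := apply heq_sym; hnorm H; apply heq_sym.

Ltac hcong :=
  first [ simple eapply heq_refl
        | simple eapply heq_vcc; hcong
        | simple eapply heq_hc; hcong
        | simple eapply heq_i2; cell_eq ].

Ltac hsolve H := unshelve (eapply heq_trans; [ nf H | apply heq_sym; eapply heq_trans; [ nf H | apply heq_sym; hcong ] ]);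
  try cell_eq'.

Ltac chain_at n T := lazymatch n with
  | 0 => T
  | S ?m => simple eapply heq_vcc; [simple eapply heq_refl | chain_at m T] end.
Ltac hat n T := unshelve (eapply heq_trans; [chain_at n T | ]); try cell_eq'.

Notation "b ;; a" := (vc2 b a ltac:(cell_eq)) (at level 60, right associativity, only parsing).
Notation Wh L a R := (hc (i2 L) (hc a (i2 R))) (only parsing).

Lemma heq_whisk {C : Cat2} (X Y Z W : C) (P : hom Z W) (Q : hom X Y) (A A' B B' : hom Y Z)
  (a : cell A A') (b : cell B B') : heq a b -> heq (hc (i2 P) (hc a (i2 Q))) (hc (i2 P) (hc b (i2 Q))).
Proof. intros h. apply heq_hc. apply heq_refl. apply heq_hc. exact h. apply heq_refl. Qed.

Section Tri.
Context {C : Cat2} (H : Is2Cat C).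
Lemma tri1 (X Y : C) (L : hom X Y) (R : hom Y X) eta eps :
  IsAdj L R eta eps -> heq (vcc (cmpA L R L) (hc eps (i2 L)) (hc (i2 L) eta)) (i2 L).
Proof. intros [T1 _]. eapply heq_trans; [| apply eq_heq; exact T1]. hsolve H. Qed.
Lemma tri2 (X Y : C) (L : hom X Y) (R : hom Y X) eta eps :
  IsAdj L R eta eps -> heq (vcc (eq_sym (cmpA R L R)) (hc (i2 R) eps) (hc eta (i2 R))) (i2 R).
Proof. intros [_ T2]. eapply heq_trans; [| apply eq_heq; exact T2]. hsolve H. Qed.
End Tri.

Ltac hrepat H n k F :=
  let T := lazymatch k with
    | 0 => open_constr:(hrep_e F)
    | 1 => open_constr:(hrep1r F)
    | 2 => open_constr:(hrep2r H F)
    | 3 => open_constr:(hrep3r H F)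
    | 4 => open_constr:(hrep4r H F)
    | 5 => open_constr:(hrep5r H F) end in
  hat n ltac:(simple eapply T; hsolve H); hnorm H.

Ltac slide_at H n dir a b :=
  let L := lazymatch dir with
    | 0 => open_constr:(@slideLR _ H _ _ _ _ _ _ _ a b)
    | 1 => open_constr:(@slideRL _ H _ _ _ _ _ _ _ a b) end in
  hat n ltac:(first [ simple eapply (hwin2 H); simple eapply L; hsolve H
                    | simple eapply L; hsolve H ]); hnorm H.
Notation "b ⋅ a" := (vcc _ b a) (at level 60, right associativity, only printing, format "'[v' b '/' ⋅  a ']'").
Notation "⟨ L | a | R ⟩" := (hc (i2 L) (hc a (i2 R))) (only printing).
Notation "⟨ L | a ]" := (hc (i2 L) a) (only printing).
Notation "[ a | R ⟩" := (hc a (i2 R)) (only printing).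
Notation "f · g" := (cmp f g) (at level 40, left associativity, only printing).

Section GenDefs.
Context {D : Cat2}.
Definition GB {a b c d : D} (Rq : hom a c) (Lq : hom c a) (etaq : cell (idm c) (cmp Rq Lq))
  (Lp : hom d b) (Rp : hom b d) (epsp : cell (cmp Lp Rp) (idm b)) (Bi : hom d c) (Tj : hom b a)
  (th : cell (cmp Lq Bi) (cmp Tj Lp)) : cell (cmp Bi Rp) (cmp Rq Tj) :=
  vc (hc (i2 Rq) (ecast (cmp1r Tj)))
  (vc (hc (i2 Rq) (hc (i2 Tj) epsp))
  (vc (hc (i2 Rq) (ecast (eq_sym (cmpA Tj Lp Rp))))
  (vc (hc (i2 Rq) (hc th (i2 Rp)))
  (vc (hc (i2 Rq) (ecast (cmpA Lq Bi Rp)))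
  (vc (ecast (eq_sym (cmpA Rq Lq (cmp Bi Rp))))
  (vc (hc etaq (i2 (cmp Bi Rp)))
      (ecast (eq_sym (cmp1l (cmp Bi Rp)))))))))).

Definition GA {a b c d : D} (Lj : hom a b) (Rj : hom b a) (epsj : cell (cmp Lj Rj) (idm b))
  (Li : hom c d) (Ri : hom d c) (etai : cell (idm c) (cmp Ri Li)) (Tq : hom c a) (Bp : hom d b)
  (th : cell (cmp Tq Ri) (cmp Rj Bp)) : cell (cmp Lj Tq) (cmp Bp Li) :=
  vc (ecast (cmp1l (cmp Bp Li)))
  (vc (hc epsj (i2 (cmp Bp Li)))
  (vc (ecast (cmpA Lj Rj (cmp Bp Li)))
  (vc (hc (i2 Lj) (ecast (eq_sym (cmpA Rj Bp Li))))
  (vc (hc (i2 Lj) (hc th (i2 Li)))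
  (vc (hc (i2 Lj) (ecast (cmpA Tq Ri Li)))
  (vc (ecast (eq_sym (cmpA Lj Tq (cmp Ri Li))))
  (vc (hc (i2 (cmp Lj Tq)) etai)
      (ecast (eq_sym (cmp1r (cmp Lj Tq))))))))))).

Definition GG {a b c d : D} (Li : hom c d) (Ri : hom d c) (epsi : cell (cmp Li Ri) (idm d))
  (Lj : hom a b) (Rj : hom b a) (etaj : cell (idm a) (cmp Rj Lj)) (Rq : hom a c) (Rp : hom b d)
  (Binv : cell (cmp Rq Rj) (cmp Ri Rp)) : cell (cmp Li Rq) (cmp Rp Lj) :=
  vc (ecast (cmp1l (cmp Rp Lj)))
  (vc (hc epsi (i2 (cmp Rp Lj)))
  (vc (ecast (cmpA Li Ri (cmp Rp Lj)))
  (vc (hc (i2 Li) (ecast (eq_sym (cmpA Ri Rp Lj))))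
  (vc (hc (i2 Li) (hc Binv (i2 Lj)))
  (vc (hc (i2 Li) (ecast (cmpA Rq Rj Lj)))
  (vc (ecast (eq_sym (cmpA Li Rq (cmp Rj Lj))))
  (vc (hc (i2 (cmp Li Rq)) etaj)
      (ecast (eq_sym (cmp1r (cmp Li Rq))))))))))).
End GenDefs.

Section Cprime.
Context {D : Cat2} (HD : Is2Cat D).
Context (X' Y' Z' W' X Y Z W : D).
Context (Li' : hom Z' W') (Ri' : hom W' Z') (Rj' : hom Y' X') (Lj' : hom X' Y')
        (Li : hom Z W) (Ri : hom W Z) (Rj : hom Y X) (Lj : hom X Y)
        (Rq' : hom X' Z') (Lq' : hom Z' X') (ηq' : cell (idm Z') (cmp Rq' Lq')) (εq' : cell (cmp Lq' Rq') (idm X'))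
        (Rp' : hom Y' W') (Lp' : hom W' Y') (ηp' : cell (idm W') (cmp Rp' Lp')) (εp' : cell (cmp Lp' Rp') (idm Y'))
        (Rq : hom X Z) (Lq : hom Z X) (ηq : cell (idm Z) (cmp Rq Lq)) (εq : cell (cmp Lq Rq) (idm X))
        (Rp : hom Y W) (Lp : hom W Y) (ηp : cell (idm W) (cmp Rp Lp)) (εp : cell (cmp Lp Rp) (idm Y))
        (x : hom X X') (y : hom Y Y') (z : hom Z Z') (w : hom W W')
        (tI : cell (cmp Lp' w) (cmp y Lp)) (tI' : cell (cmp Lq' z) (cmp x Lq))
        (tJ : cell (cmp z Ri) (cmp Ri' w)) (tJ' : cell (cmp x Rj) (cmp Rj' y))
        (tK : cell (cmp Lq Ri) (cmp Rj Lp)) (tK' : cell (cmp Lq' Ri') (cmp Rj' Lp'))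
        (AQ : IsAdj Lq Rq ηq εq) (AP' : IsAdj Lp' Rp' ηp' εp')
        (ηj' : cell (idm X') (cmp Rj' Lj')) (εj' : cell (cmp Lj' Rj') (idm Y'))
        (ηi' : cell (idm Z') (cmp Ri' Li')) (εi' : cell (cmp Li' Ri') (idm W'))
        (ηj : cell (idm X) (cmp Rj Lj)) (εj : cell (cmp Lj Rj) (idm Y))
        (ηi : cell (idm Z) (cmp Ri Li)) (εi : cell (cmp Li Ri) (idm W))
        (AJ' : IsAdj Lj' Rj' ηj' εj') (AI : IsAdj Li Ri ηi εi)
        (K'inv : cell (cmp Rq' Rj') (cmp Ri' Rp')) (Kinv : cell (cmp Rq Rj) (cmp Ri Rp)).

Lemma cprime_L :
  heq ((hc (i2 Rq') tJ') ;; (hc (GB ηq' εq tI') (i2 Rj)) ;; (hc (i2 z) (GB ηq εp tK)))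
      ((hc (i2 (cmp Rq' (cmp Rj' y))) εp) ;; (Wh Rq' ((hc tJ' (i2 Lp)) ;; (hc (i2 x) tK) ;; (hc tI' (i2 Ri))) Rp) ;; (hc ηq' (i2 (cmp z (cmp Ri Rp))))).
Proof.
  unfold vc2, GB. hnorm HD.
  slide_at HD 3 1 ηq' (hc (i2 (cmp z (cmp Rq Rj))) εp).
  slide_at HD 4 1 ηq' (hc (i2 (cmp z Rq)) (hc tK (i2 Rp))).
  slide_at HD 5 1 ηq' (hc (i2 z) (hc ηq (i2 (cmp Ri Rp)))).
  slide_at HD 2 1 (hc (i2 Rq') tI') (hc (i2 (cmp Rq Rj)) εp).
  slide_at HD 3 1 (hc (i2 Rq') tI') (hc (i2 Rq) (hc tK (i2 Rp))).
  slide_at HD 4 1 (hc (i2 Rq') tI') (hc ηq (i2 (cmp Ri Rp))).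
  slide_at HD 1 1 (hc (i2 (cmp Rq' x)) εq) (hc (i2 Rj) εp).
  slide_at HD 2 1 (hc (i2 (cmp Rq' x)) εq) (hc tK (i2 Rp)).
  hrepat HD 3 2 (heq_whisk (cmp Rq' x) (cmp Ri Rp) (tri1 HD AQ)).
  slide_at HD 0 1 (hc (i2 Rq') tJ') εp.
  hsolve HD.
Qed.

Lemma cprime_R :
  heq ((hc (GB ηq' εp' tK') (i2 y)) ;; (hc (i2 Ri') (GB ηp' εp tI)) ;; (hc tJ (i2 Rp)))
      ((hc (i2 (cmp Rq' (cmp Rj' y))) εp) ;; (Wh Rq' ((hc (i2 Rj') tI) ;; (hc tK' (i2 w)) ;; (hc (i2 Lq') tJ)) Rp) ;; (hc ηq' (i2 (cmp z (cmp Ri Rp))))).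
Proof.
  unfold vc2, GB. hnorm HD.
  slide_at HD 2 1 ηq' (hc (i2 (cmp Ri' (cmp Rp' y))) εp).
  slide_at HD 3 1 ηq' (hc (i2 (cmp Ri' Rp')) (hc tI (i2 Rp))).
  slide_at HD 4 1 ηq' (hc (i2 Ri') (hc ηp' (i2 (cmp w Rp)))).
  slide_at HD 5 1 ηq' (hc tJ (i2 Rp)).
  slide_at HD 1 1 (hc (i2 Rq') tK') (hc (i2 (cmp Rp' y)) εp).
  slide_at HD 2 1 (hc (i2 Rq') tK') (hc (i2 Rp') (hc tI (i2 Rp))).
  slide_at HD 3 1 (hc (i2 Rq') tK') (hc ηp' (i2 (cmp w Rp))).
  slide_at HD 0 1 (hc (i2 (cmp Rq' Rj')) εp') (hc (i2 y) εp).
  slide_at HD 1 1 (hc (i2 (cmp Rq' Rj')) εp') (hc tI (i2 Rp)).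
  hrepat HD 2 2 (heq_whisk (cmp Rq' Rj') (cmp w Rp) (tri1 HD AP')).
  hsolve HD.
Qed.

Lemma stepA :
  heq (vc (hc (i2 Rp') (GA εj' ηj tJ'))
      (vc (ecast (eq_sym (cmpA Rp' Lj' x)))
      (vc (hc (GG εi' ηj' K'inv) (i2 x))
      (vc (ecast (cmpA Li' Rq' x))
          (hc (i2 Li') (GB ηq' εq tI'))))))
      ((hc εi' (i2 (cmp Rp' (cmp y Lj)))) ;;
       (hc (i2 Li') (hc ((hc K'inv (i2 y)) ;; (hc (i2 Rq') tJ') ;; (hc (GB ηq' εq tI') (i2 Rj))) (i2 Lj))) ;;
       (hc (i2 (cmp Li' (cmp z Rq))) ηj)).
Proof.
  unfold vc2, GB, GA, GG. hnorm HD.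
  slide_at HD 2 0 (hc εi' (i2 (cmp Rp' (cmp Lj' x)))) ηj.
  slide_at HD 3 0 (hc (i2 Li') (hc K'inv (i2 (cmp Lj' x)))) ηj.
  slide_at HD 4 0 (hc (i2 (cmp Li' Rq')) (hc ηj' (i2 x))) ηj.
  slide_at HD 5 0 (hc (i2 (cmp Li' (cmp Rq' x))) εq) ηj.
  slide_at HD 6 0 (hc (i2 (cmp Li' Rq')) (hc tI' (i2 Rq))) ηj.
  slide_at HD 7 0 (hc (i2 Li') (hc ηq' (i2 (cmp z Rq)))) ηj.
  slide_at HD 1 0 εi' (hc (i2 (cmp Rp' Lj')) (hc tJ' (i2 Lj))).
  slide_at HD 0 0 εi' (hc (i2 Rp') (hc εj' (i2 (cmp y Lj)))).
  slide_at HD 2 0 (hc (i2 Li') K'inv) (hc (i2 Lj') (hc tJ' (i2 Lj))).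
  slide_at HD 1 0 (hc (i2 Li') K'inv) (hc εj' (i2 (cmp y Lj))).
  slide_at HD 3 0 (hc (i2 (cmp Li' Rq')) ηj') (hc tJ' (i2 Lj)).
  hrepat HD 2 2 (heq_whisk (cmp Li' Rq') (cmp y Lj) (tri2 HD AJ')).
  hsolve HD.
Qed.

Lemma stepB :
  heq (vc (ecast (eq_sym (cmpA Rp' y Lj)))
      (vc (hc (GB ηp' εp tI) (i2 Lj))
      (vc (ecast (cmpA w Rp Lj))
      (vc (hc (i2 w) (GG εi ηj Kinv))
      (vc (ecast (eq_sym (cmpA w Li Rq)))
      (vc (hc (GA εi' ηi tJ) (i2 Rq))
          (ecast (cmpA Li' z Rq))))))))
      ((hc εi' (i2 (cmp Rp' (cmp y Lj)))) ;;
       (hc (i2 Li') (hc ((hc (i2 Ri') (GB ηp' εp tI)) ;; (hc tJ (i2 Rp)) ;; (hc (i2 z) Kinv)) (i2 Lj))) ;;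
       (hc (i2 (cmp Li' (cmp z Rq))) ηj)).
Proof.
  unfold vc2, GB, GA, GG. hnorm HD.
  slide_at HD 5 0 εi' (hc (i2 (cmp w (cmp Li Rq))) ηj).
  slide_at HD 4 0 εi' (hc (i2 (cmp w Li)) (hc Kinv (i2 Lj))).
  slide_at HD 3 0 εi' (hc (i2 w) (hc εi (i2 (cmp Rp Lj)))).
  slide_at HD 2 0 εi' (hc ηp' (i2 (cmp w (cmp Rp Lj)))).
  slide_at HD 1 0 εi' (hc (i2 Rp') (hc tI (i2 (cmp Rp Lj)))).
  slide_at HD 0 0 εi' (hc (i2 (cmp Rp' y)) (hc εp (i2 Lj))).
  slide_at HD 6 0 (hc (i2 Li') tJ) (hc (i2 (cmp Li Rq)) ηj).
  slide_at HD 5 0 (hc (i2 Li') tJ) (hc (i2 Li) (hc Kinv (i2 Lj))).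
  slide_at HD 4 0 (hc (i2 Li') tJ) (hc εi (i2 (cmp Rp Lj))).
  slide_at HD 7 0 (hc (i2 (cmp Li' z)) ηi) (hc (i2 Rq) ηj).
  slide_at HD 6 0 (hc (i2 (cmp Li' z)) ηi) (hc Kinv (i2 Lj)).
  hrepat HD 5 2 (heq_whisk (cmp Li' z) (cmp Rp Lj) (tri2 HD AI)).
  hsolve HD.
Qed.

Lemma stepC
  (cube : heq ((hc tJ' (i2 Lp)) ;; (hc (i2 x) tK) ;; (hc tI' (i2 Ri)))
              ((hc (i2 Rj') tI) ;; (hc tK' (i2 w)) ;; (hc (i2 Lq') tJ)))
  (HKinv : IsInverse (GB ηq εp tK) Kinv) (HK'inv : IsInverse (GB ηq' εp' tK') K'inv) :
  heq ((hc K'inv (i2 y)) ;; (hc (i2 Rq') tJ') ;; (hc (GB ηq' εq tI') (i2 Rj)))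
      ((hc (i2 Ri') (GB ηp' εp tI)) ;; (hc tJ (i2 Rp)) ;; (hc (i2 z) Kinv)).
Proof.
  assert (cp : heq ((hc (i2 Rq') tJ') ;; (hc (GB ηq' εq tI') (i2 Rj)) ;; (hc (i2 z) (GB ηq εp tK)))
                   ((hc (GB ηq' εp' tK') (i2 y)) ;; (hc (i2 Ri') (GB ηp' εp tI)) ;; (hc tJ (i2 Rp)))).
  { eapply heq_trans. apply cprime_L. eapply heq_trans. 2: apply heq_sym, cprime_R.
    unfold vc2. unshelve (simple eapply heq_vcc; [ apply heq_refl | simple eapply heq_vcc;
      [ apply heq_hc; [ apply heq_refl | apply heq_hc; [ exact cube | apply heq_refl ] ] | apply heq_refl ] ]);
    try cell_eq'. }
  unfold GB in HKinv, HK'inv.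
  eapply heq_trans.
  { apply heq_sym. instantiate (1 := (hc K'inv (i2 y)) ;; ((hc (i2 Rq') tJ') ;; (hc (GB ηq' εq tI') (i2 Rj)) ;; (hc (i2 z) (GB ηq εp tK))) ;; (hc (i2 z) Kinv)).
    unfold vc2, GB. hnorm HD.
    hrepat HD 5 0 (heq_hc (heq_refl (i2 z)) (eq_heq (proj2 HKinv))).
    hsolve HD. }
  eapply heq_trans.
  { unfold vc2. unshelve (simple eapply heq_vcc; [ apply heq_refl | simple eapply heq_vcc;
      [ exact cp | apply heq_refl ] ]); try cell_eq'. }
  unfold vc2, GB. hnorm HD.
  hrepat HD 0 4 (heq_hc (eq_heq (proj1 HK'inv)) (heq_refl (i2 y))).
  hsolve HD.
Qed.

Theorem genMain
  (cube : heq ((hc tJ' (i2 Lp)) ;; (hc (i2 x) tK) ;; (hc tI' (i2 Ri)))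
              ((hc (i2 Rj') tI) ;; (hc tK' (i2 w)) ;; (hc (i2 Lq') tJ)))
  (HKinv : IsInverse (GB ηq εp tK) Kinv) (HK'inv : IsInverse (GB ηq' εp' tK') K'inv) :
  vc (hc (i2 Rp') (GA εj' ηj tJ'))
      (vc (ecast (eq_sym (cmpA Rp' Lj' x)))
      (vc (hc (GG εi' ηj' K'inv) (i2 x))
      (vc (ecast (cmpA Li' Rq' x))
          (hc (i2 Li') (GB ηq' εq tI')))))
  =
  vc (ecast (eq_sym (cmpA Rp' y Lj)))
      (vc (hc (GB ηp' εp tI) (i2 Lj))
      (vc (ecast (cmpA w Rp Lj))
      (vc (hc (i2 w) (GG εi ηj Kinv))
      (vc (ecast (eq_sym (cmpA w Li Rq)))
      (vc (hc (GA εi' ηi tJ) (i2 Rq))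
          (ecast (cmpA Li' z Rq))))))).
Proof.
  apply heq_eq. eapply heq_trans. apply stepA. eapply heq_trans. 2: apply heq_sym, stepB.
  unfold vc2. unshelve (simple eapply heq_vcc; [ apply heq_refl | simple eapply heq_vcc;
      [ apply heq_hc; [ apply heq_refl | apply heq_hc; [ apply (stepC cube HKinv HK'inv) | apply heq_refl ] ] | apply heq_refl ] ]);
  try cell_eq'.
Qed.
End Cprime.

Section PF.
Context {C D : Cat2} (P0 : C -> D) (F : @PsContra C D P0) (HF : PsContraLaws F) (HD : Is2Cat D).

Lemma pb2_vc (X Y : C) (f g h : hom X Y) (b : cell g h) (a : cell f g) :
  pb2 F (vc b a) = vc (pb2 F a) (pb2 F b).
Proof. apply (pb2_v HF). Qed.
Lemma pb2_ecast (X Y : C) (f g : hom X Y) (e : f = g) :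
  pb2 F (ecast e) = ecast (f_equal (pb F) (eq_sym e)).
Proof. destruct e. cbn. apply (pb2_1 HF). Qed.
Lemma pb2_i2 (X Y : C) (f : hom X Y) : pb2 F (i2 f) = i2 (pb F f).
Proof. apply (pb2_1 HF). Qed.
Lemma pb2_hc (X Y Z : C) (g g' : hom Y Z) (f f' : hom X Y) (b : cell g g') (a : cell f f') :
  pb2 F (hc b a) = vc (phiI F g f) (vc (hc (pb2 F a) (pb2 F b)) (phi F g' f')).
Proof.
  rewrite <- (phi_nat HF). rewrite (vA HD), (phi_iso1 HF), (v1l HD). reflexivity.
Qed.

Lemma ins_left (X Y : D) (f g h : hom X Y) (a : cell g h) (a' : cell h g) (x : cell f g)
  (Hi : vc a' a = i2 g) : heq x (vc a' (vc a x)).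
Proof. apply eq_heq. rewrite (vA HD), Hi, (v1l HD). reflexivity. Qed.

Lemma phiA (X Y Z W : C) (h : hom Z W) (g : hom Y Z) (f : hom X Y) :
  heq ((hc (i2 (pb F f)) (phi F h g)) ;; (phi F (cmp h g) f))
      ((hc (phi F g f) (i2 (pb F h))) ;; (phi F h (cmp g f))).
Proof.
  pose proof (eq_heq (phi_assoc HF h g f)) as E.
  apply (fun h1 h2 => heq_trans h1 (heq_trans (heq_sym E) h2)); unfold vc2; hsolve HD.
Qed.

Lemma A1 (X Y Z W : C) (h : hom Z W) (g : hom Y Z) (f : hom X Y) :
  heq (vcc (f_equal (pb F) (cmpA h g f)) (phi F (cmp h g) f) (phiI F h (cmp g f)))
      ((hc (i2 (pb F f)) (phiI F h g)) ;; (hc (phi F g f) (i2 (pb F h)))).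
Proof.
  hnorm HD.
  hrepat HD 0 1 (ins_left (a := hc (i2 (pb F f)) (phi F h g)) (a' := hc (i2 (pb F f)) (phiI F h g)) (phi F (cmp h g) f)
                 ltac:(rewrite <- (hc_v HD), (phi_iso1 HF), (v1l HD), (hc_1 HD); reflexivity)).
  hrepat HD 1 2 (phiA h g f).
  hrepat HD 2 0 (eq_heq (phi_iso2 HF h (cmp g f))).
  hsolve HD.
Qed.

Lemma A2 (X Y Z W : C) (h : hom Z W) (g : hom Y Z) (f : hom X Y) :
  heq (vcc (eq_sym (f_equal (pb F) (cmpA h g f))) (phi F h (cmp g f)) (phiI F (cmp h g) f))
      ((hc (phiI F g f) (i2 (pb F h))) ;; (hc (i2 (pb F f)) (phi F h g))).
Proof.
  hnorm HD.
  hrepat HD 0 1 (ins_left (a := hc (phi F g f) (i2 (pb F h))) (a' := hc (phiI F g f) (i2 (pb F h))) (phi F h (cmp g f))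
                 ltac:(rewrite <- (hc_v HD), (phi_iso1 HF), (v1l HD), (hc_1 HD); reflexivity)).
  hrepat HD 1 2 (heq_sym (phiA h g f)).
  hrepat HD 2 0 (eq_heq (phi_iso2 HF (cmp h g) f)).
  hsolve HD.
Qed.
End PF.

Section CubeS.
Context (S : Setting) (HS : SettingLaws S).

Definition th {X Y Z W : sC S} (j : hom X Y) (q : hom X Z) (i : hom Z W) (p : hom Y W)
  (a : cell (cmp p j) (cmp i q)) : cell (cmp (us S q) (us S i)) (cmp (us S j) (us S p)) :=
  vc (phi (sF S) p j) (vc (pb2 (sF S) a) (phiI (sF S) i q)).

Context (X' Y' Z' W' X Y Z W : sC S)
    (j' : hom X' Y') (i' : hom Z' W') (j : hom X Y) (i : hom Z W)
    (q' : hom X' Z') (p' : hom Y' W') (q : hom X Z) (p : hom Y W)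
    (x : hom X' X) (y : hom Y' Y) (z : hom Z' Z) (w : hom W' W)
    (I : cell (cmp p y) (cmp w p'))
    (I' : cell (cmp q x) (cmp z q'))
    (J : cell (cmp w i') (cmp i z))
    (J' : cell (cmp y j') (cmp j x))
    (K : cell (cmp p j) (cmp i q))
    (K' : cell (cmp p' j') (cmp i' q')).

Let HD := law_D HS.
Let HF := law_F HS.

Definition cubeL : cell (cmp (cmp p y) j') (cmp (cmp i z) q') :=
  vc (hc J (i2 q')) (vc (ecast (cmpA w i' q')) (vc (hc (i2 w) K')
        (vc (ecast (eq_sym (cmpA w p' j'))) (hc I (i2 j'))))).
Definition cubeR : cell (cmp (cmp p y) j') (cmp (cmp i z) q') :=
  vc (ecast (cmpA i z q')) (vc (hc (i2 i) I') (vc (ecast (eq_sym (cmpA i q x)))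
        (vc (hc K (i2 x)) (vc (ecast (cmpA p j x)) (vc (hc (i2 p) J')
          (ecast (eq_sym (cmpA p y j')))))))).

Lemma L3R :
  heq ((hc (i2 (us S j')) (th I)) ;; (hc (th K') (i2 (us S w))) ;; (hc (i2 (us S q')) (th J)))
      ((hc (i2 (us S j')) (phi (sF S) p y)) ;; (phi (sF S) (cmp p y) j') ;; (pb2 (sF S) cubeL) ;; (phiI (sF S) (cmp i z) q')
        ;; (hc (i2 (us S q')) (phiI (sF S) i z))).
Proof.
  apply heq_sym. unfold cubeL.
  rewrite !(pb2_vc HF), !(pb2_ecast HF), !(pb2_hc HF HD), !(pb2_i2 HF).
  unfold th, us. hnorm HD.
  hrepat HD 10 2 (eq_heq (phi_iso2 HF (cmp i z) q')).
  hrepat HD 7 2 (A2 HF HD w i' q').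
  hrepat HD 4 2 (A1 HF HD w p' j').
  hrepat HD 1 2 (eq_heq (phi_iso2 HF (cmp p y) j')).
  hsolve HD.
Qed.

Lemma L3L :
  heq ((hc (th J') (i2 (us S p))) ;; (hc (i2 (us S x)) (th K)) ;; (hc (th I') (i2 (us S i))))
      ((hc (i2 (us S j')) (phi (sF S) p y)) ;; (phi (sF S) (cmp p y) j') ;; (pb2 (sF S) cubeR) ;; (phiI (sF S) (cmp i z) q')
        ;; (hc (i2 (us S q')) (phiI (sF S) i z))).
Proof.
  apply heq_sym. unfold cubeR.
  rewrite !(pb2_vc HF), !(pb2_ecast HF), !(pb2_hc HF HD), !(pb2_i2 HF).
  unfold th, us. hnorm HD.
  hrepat HD 10 2 (A2 HF HD i z q').
  hrepat HD 11 0 (heq_whisk (pb (sF S) q') (idm _) (eq_heq (phi_iso2 HF i z))).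
  hrepat HD 7 2 (A1 HF HD i q x).
  hrepat HD 4 2 (A2 HF HD p j x).
  hrepat HD 1 2 (A1 HF HD p y j').
  hrepat HD 0 2 (heq_whisk (pb (sF S) j') (idm _) (eq_heq (phi_iso2 HF p y))).
  hsolve HD.
Qed.

Lemma cube_theta (Hcube : cubeL = cubeR) :
  heq ((hc (th J') (i2 (us S p))) ;; (hc (i2 (us S x)) (th K)) ;; (hc (th I') (i2 (us S i))))
      ((hc (i2 (us S j')) (th I)) ;; (hc (th K') (i2 (us S w))) ;; (hc (i2 (us S q')) (th J))).
Proof.
  eapply heq_trans. apply L3L. rewrite <- Hcube. apply heq_sym. apply L3R.
Qed.
End CubeS.

Section Assembly.
Context (S : Setting) (HS : SettingLaws S).

Lemma Bsq_GB (X Y Z W : sC S) (j : hom X Y) (q : hom X Z) (i : hom Z W) (p : hom Y W)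
  (hp : smor (sB S) p) (hq : smor (sB S) q) (a : cell (cmp p j) (cmp i q)) :
  Bsq S j q i p hp hq a = GB (etaB S hq) (epsB S hp) (th a).
Proof. apply heq_eq. unfold Bsq, GB, th, ps, us. hsolve (law_D HS). Qed.

Lemma Asq_GA (X Y Z W : sC S) (j : hom X Y) (q : hom X Z) (i : hom Z W) (p : hom Y W)
  (hi : smor (sA S) i) (hj : smor (sA S) j) (a : cell (cmp p j) (cmp i q)) :
  Asq S j q i p hi hj a = GA (epsA S hj) (etaA S hi) (th a).
Proof. apply heq_eq. unfold Asq, GA, th, sh, us. hsolve (law_D HS). Qed.

Lemma Gsq_GG (X Y Z W : sC S) (j : hom X Y) (q : hom X Z) (i : hom Z W) (p : hom Y W)
  (hi : smor (sA S) i) (hj : smor (sA S) j) (hp : smor (sB S) p) (hq : smor (sB S) q) Binv :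
  Gsq S j q i p hi hj hp hq Binv = GG (epsA S hi) (etaA S hj) Binv.
Proof. reflexivity. Qed.
End Assembly.

Theorem mainTheorem16 (S : Setting) (HS : SettingLaws S)
    (X' Y' Z' W' X Y Z W : sC S)
    (* edges in A *)
    (j' : hom X' Y') (i' : hom Z' W') (j : hom X Y) (i : hom Z W)
    (hj' : smor (sA S) j') (hi' : smor (sA S) i') (hj : smor (sA S) j) (hi : smor (sA S) i)
    (* edges in B *)
    (q' : hom X' Z') (p' : hom Y' W') (q : hom X Z) (p : hom Y W)
    (hq' : smor (sB S) q') (hp' : smor (sB S) p') (hq : smor (sB S) q) (hp : smor (sB S) p)
    (* vertical edges in C *)
    (x : hom X' X) (y : hom Y' Y) (z : hom Z' Z) (w : hom W' W)
    (* faces *)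
    (I : cell (cmp p y) (cmp w p'))       (* right *)
    (I' : cell (cmp q x) (cmp z q'))      (* left *)
    (J : cell (cmp w i') (cmp i z))       (* front, beta *)
    (J' : cell (cmp y j') (cmp j x))      (* back, beta' *)
    (K : cell (cmp p j) (cmp i q))        (* bottom *)
    (K' : cell (cmp p' j') (cmp i' q'))   (* top *)
    (* 2-commutativity of the cube *)
    (Hcube :
      vc (hc J (i2 q')) (vc (ecast (cmpA w i' q')) (vc (hc (i2 w) K')
        (vc (ecast (eq_sym (cmpA w p' j'))) (hc I (i2 j')))))
      = vc (ecast (cmpA i z q')) (vc (hc (i2 i) I') (vc (ecast (eq_sym (cmpA i q x)))
        (vc (hc K (i2 x)) (vc (ecast (cmpA p j x)) (vc (hc (i2 p) J')
          (ecast (eq_sym (cmpA p y j')))))))))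
    (* B_K and B_K' are invertible *)
    (Kinv : cell (cmp (ps S hq) (us S j)) (cmp (us S i) (ps S hp)))
    (HKinv : IsInverse (Bsq S j q i p hp hq K) Kinv)
    (K'inv : cell (cmp (ps S hq') (us S j')) (cmp (us S i') (ps S hp')))
    (HK'inv : IsInverse (Bsq S j' q' i' p' hp' hq' K') K'inv) :
  (* A_J' o G_K' o B_I' *)
  vc (hc (i2 (ps S hp')) (Asq S j' x j y hj hj' J'))
  (vc (ecast (eq_sym (cmpA (ps S hp') (sh S hj') (us S x))))
  (vc (hc (Gsq S j' q' i' p' hi' hj' hp' hq' K'inv) (i2 (us S x)))
  (vc (ecast (cmpA (sh S hi') (ps S hq') (us S x)))
      (hc (i2 (sh S hi')) (Bsq S x q' z q hq hq' I')))))
  =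
  (* B_I o G_K o A_J *)
  vc (ecast (eq_sym (cmpA (ps S hp') (us S y) (sh S hj))))
  (vc (hc (Bsq S y p' w p hp hp' I) (i2 (sh S hj)))
  (vc (ecast (cmpA (us S w) (ps S hp) (sh S hj)))
  (vc (hc (i2 (us S w)) (Gsq S j q i p hi hj hp hq Kinv))
  (vc (ecast (eq_sym (cmpA (us S w) (sh S hi) (ps S hq))))
  (vc (hc (Asq S i' z i w hi hi' J) (i2 (ps S hq)))
      (ecast (cmpA (sh S hi') (us S z) (ps S hq)))))))).
Proof.
  pose proof (law_D HS) as HD.
  rewrite !Asq_GA, !Bsq_GB, !Gsq_GG.
  rewrite Bsq_GB in HKinv, HK'inv.
  eapply genMain. all: try exact HD. all: try exact HKinv. all: try exact HK'inv.
  all: try (apply (adj_B HS)). all: try (apply (adj_A HS)). all: try exact HS.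
  eapply heq_trans. 2: eapply heq_trans. 2: apply (cube_theta HS Hcube).
  - hsolve HD.
  - hsolve HD.
Qed.
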